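(* Let $\mathcal{A}=\{A_1,\dots,A_m\}$ be a bimodal collection of pairwise disjoint nonempty subsets of a finite abelian group $G$, with internal difference groups $H_1,\dots,H_m$, labelled so that $|A_i|<|H_i|$ exactly for $i=1,\dots,r$, and suppose $r\ge 2$. For each $i$ let $a_i+H_i$ denote the coset of $H_i$ containing $A_i$. Then there exists a nonempty subset $D\subseteq G$ such that: (1) $a_i+H_i=A_i\sqcup D$ (disjoint union) for every $i\le r$; (2) $(a_i+H_i)\cap(a_j+H_j)=D$ for all distinct $i,j\in\{1,\dots,r\}$; (3) $D$ is a coset of a subgroup of $G$.
   Context: $G$ is written additively. The internal difference group $H_i$ of $A_i$ is the subgroup generated by all $x-y$ with $x,y\in A_i$; $A_i$ lies in a single coset of $H_i$ and $|A_i|\le|H_i|$. A collection $\{A_1,\dots,A_m\}$ of pairwise disjoint subsets of $G$ is bimodal if for every $i$ and every $\delta\in G\setminus\{0\}$, the number $N_i(\delta)$ of pairs $(a,b)$ with $a\in A_i$, $b\in A_j$ for some $j\neq i$, and $a-b=\delta$, satisfies $N_i(\delta)\in\{0,|A_i|\}$. *)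

(* Defs.v *)
(* The finite abelian group G is modelled as a finGroupType
   gT with [set: gT] abelian, written multiplicatively: x - y becomes x * y^-1,
   a + H becomes a *: H. *)
From HB Require Import structures.
From mathcomp Require Import all_boot all_fingroup.
Set Implicit Arguments. Unset Strict Implicit. Unset Printing Implicit Defensive.
Local Open Scope group_scope.

Section Defs.
Variable gT : finGroupType.

Definition diffset (A : {set gT}) : {set gT} :=
  [set x * y^-1 | x in A, y in A].

Definition intdiff (A : {set gT}) : {set gT} := <<diffset A>>.

Definition intcoset (A : {set gT}) : {set gT} := repr A *: intdiff A.

Definition Ncount (m : nat) (A : 'I_m -> {set gT}) (i : 'I_m) (delta : gT) : nat :=
  #|[set p : gT * gT | [&& p.1 \in A i,
                          p.2 \in \bigcup_(j | j != i) A j &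
                          p.1 * p.2^-1 == delta]]|.

Definition bimodal (m : nat) (A : 'I_m -> {set gT}) : Prop :=
  (forall i j, i != j -> [disjoint A i & A j]) /\
  (forall i delta, delta != 1 ->
     Ncount A i delta = 0%N \/ Ncount A i delta = #|A i|).

Definition is_coset (D : {set gT}) : Prop :=
  exists (K : {group gT}) (d : gT), D = d *: K.
End Defs.

(* Main.v *)
Require Import Defs.
From mathcomp Require Import all_boot all_fingroup.
Local Open Scope group_scope.

Lemma ab_comm (gT : finGroupType) : abelian [set: gT] -> forall x y : gT, commute x y.
Proof. by move/centsP=> ab x y; apply: ab; rewrite inE. Qed.

Lemma sat_base (gT : finGroupType) (m : nat) (A : 'I_m -> {set gT}) k y a1 a2 :
  (forall x y : gT, commute x y) -> bimodal A ->
  y \in \bigcup_j A j -> y \notin A k -> a1 \in A k -> a2 \in A k ->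
  (y * (a1 * a2^-1) \in \bigcup_j A j) && (y * (a1 * a2^-1) \notin A k).
Proof.
move=> comm [disj bm] yW yA a1A a2A.
set d := a2 * y^-1.
have d1 : d != 1.
  apply: contra yA; rewrite /d => /eqP e.
  by have -> : y = a2 by apply: (mulIg y^-1); rewrite mulgV.
set P := [set p : gT * gT | [&& p.1 \in A k,
                          p.2 \in \bigcup_(j | j != k) A j &
                          p.1 * p.2^-1 == d]].
have yU : y \in \bigcup_(j | j != k) A j.
  case/bigcupP: yW => j _ yj; apply/bigcupP; exists j => //.
  by apply: contraNneq yA => <-.
have PN : #|P| = Ncount A k d by [].
have inP : (a2, y) \in P by rewrite inE /= a2A yU eqxx.
have NA : Ncount A k d = #|A k|.
  case: (bm k d d1) => // N0.
  by move: N0; rewrite -PN => /eqP; rewrite cards_eq0 => /eqP P0; rewrite P0 inE in inP.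
have inj : {in P &, injective (fun p : gT * gT => p.1)}.
  move=> p q Hp Hq /= e. destruct p as [p1 p2]; destruct q as [q1 q2]; simpl in e; subst q1.
  move: Hp Hq; rewrite !inE /= => /and3P [_ _ /eqP e1] /and3P [_ _ /eqP e2].
  congr (_, _).
  by apply: invg_inj; apply: (mulgI p1); rewrite e1 e2.
have sub : [set p.1 | p in P] \subset A k.
  apply/subsetP => z /imsetP [p]; rewrite inE => /and3P [h _ _] ->; exact: h.
have ceq : #|[set p.1 | p in P]| = #|A k| by rewrite card_in_imset // PN NA.
have := (subset_cardP ceq sub a1); rewrite a1A => /imsetP [[p1 p2]].
rewrite inE /= => /and3P [_ p2U /eqP e] ep1; subst p1.
have -> : y * (a1 * a2^-1) = p2.
  have e' : p2^-1 = a1^-1 * d by rewrite -e mulKg.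
  apply: invg_inj; rewrite e' /d !invMg invgK.
  by rewrite mulgA (comm a2).
case/bigcupP: p2U => j jk p2j; apply/andP; split.
  by apply/bigcupP; exists j.
by rewrite (disjointFr (disj j k jk) p2j).
Qed.

Lemma sat (gT : finGroupType) (m : nat) (A : 'I_m -> {set gT}) k y h :
  (forall x y : gT, commute x y) -> bimodal A ->
  y \in \bigcup_j A j -> y \notin A k -> h \in intdiff (A k) ->
  (y * h \in \bigcup_j A j) && (y * h \notin A k).
Proof.
move=> comm bm yW yA.
set S := [set h : gT | [forall y, (y \in \bigcup_j A j) && (y \notin A k) ==>
                  (y * h \in \bigcup_j A j) && (y * h \notin A k)]].
have gS : group_set S.
  apply/group_setP; split.
    by rewrite inE; apply/forallP => z; rewrite mulg1; apply/implyP.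
  move=> u v; rewrite !inE => /forallP Hu /forallP Hv; apply/forallP => z.
  apply/implyP => Hz; rewrite mulgA; apply: (implyP (Hv _)).
  exact: (implyP (Hu _)).
have sub : intdiff (A k) \subset (Group gS).
  rewrite /intdiff gen_subG; apply/subsetP => x /imset2P [a1 a2 h1 h2 ->].
  rewrite /= inE; apply/forallP => z; apply/implyP => /andP [zW zA].
  exact: sat_base.
move=> /(subsetP sub); rewrite /= inE => /forallP /(_ y) /implyP; apply.
by rewrite yW.
Qed.

Canonical intdiff_group (gT : finGroupType) (B : {set gT}) : {group gT} :=
  @Group gT (intdiff B) (groupP (generated_group (diffset B))).

Lemma A_sub_C (gT : finGroupType) (B : {set gT}) x :
  (forall x y : gT, commute x y) -> x \in B -> x \in intcoset B.
Proof.
move=> comm xB; rewrite /intcoset mem_lcoset comm.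
by apply: mem_gen; apply: imset2_f => //; apply: mem_repr xB.
Qed.

Lemma C_W_A (gT : finGroupType) (m : nat) (A : 'I_m -> {set gT}) k x :
  (forall x y : gT, commute x y) -> bimodal A -> A k != set0 ->
  x \in intcoset (A k) -> x \in \bigcup_j A j -> x \in A k.
Proof.
move=> comm bm /set0Pn [a0 a0A] xC xW; apply/negPn/negP => xA.
have h : x^-1 * repr (A k) \in intdiff (A k).
  move: xC; rewrite /intcoset mem_lcoset => hx.
  by rewrite -(invgK (repr (A k))) -invMg groupV.
have := sat _ _ _ _ _ _ comm bm xW xA h; rewrite mulKVg (mem_repr _ a0A).
by rewrite andbF.
Qed.

Lemma step1 (gT : finGroupType) (m : nat) (A : 'I_m -> {set gT}) j x h :
  (forall x y : gT, commute x y) -> bimodal A ->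
  x \notin \bigcup_i A i -> x \notin intcoset (A j) -> h \in intdiff (A j) ->
  x * h \notin \bigcup_i A i.
Proof.
move=> comm bm xW xC hH; apply/negP => xhW.
have xhA : x * h \notin A j.
  apply: contra xC => /(A_sub_C _ _ _ comm); rewrite /intcoset !mem_lcoset mulgA.
  by rewrite groupMr.
have := sat _ _ _ _ _ _ comm bm xhW xhA (groupVr hH); rewrite mulgK => /andP [H _].
by rewrite H in xW.
Qed.

Lemma step2 (gT : finGroupType) (m : nat) (A : 'I_m -> {set gT}) i j x :
  (forall x y : gT, commute x y) -> bimodal A -> A i != set0 -> i != j ->
  x \in intcoset (A i) -> x \notin \bigcup_k A k -> x \notin intcoset (A j) ->
  intdiff (A j) \subset intdiff (A i).
Proof.
move=> comm bm ne ij xC xW xCj; apply/subsetP => hj hjH.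
case/set0Pn: (ne) => a0 a0A.
set a := repr (A i).
have aA : a \in A i by apply: mem_repr a0A.
have aW : a \in \bigcup_k A k by apply/bigcupP; exists i.
have aAj : a \notin A j.
  by case: bm => disj _; rewrite (disjointFr (disj i j ij) aA).
have /andP [ahW _] := sat _ _ _ _ _ _ comm bm aW aAj hjH.
case: (boolP (a * hj \in A i)) => ahA.
  by move: (A_sub_C _ _ _ comm ahA); rewrite /intcoset -/a mem_lcoset mulKg.
have hi : a^-1 * x \in intdiff (A i) by move: xC; rewrite /intcoset mem_lcoset.
have /andP [H _] := sat _ _ _ _ _ _ comm bm ahW ahA hi.
move: H; rewrite -mulgA (comm hj) mulgA mulKVg => H; move: (step1 _ _ _ _ _ _ comm bm xW xCj hjH); by rewrite H.
Qed.

Lemma step3 (gT : finGroupType) (m : nat) (A : 'I_m -> {set gT}) i j x :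
  (forall x y : gT, commute x y) -> bimodal A -> (forall k, A k != set0) -> i != j ->
  #|A j| < #|intdiff (A j)| ->
  x \in intcoset (A i) -> x \notin \bigcup_k A k -> x \in intcoset (A j).
Proof.
move=> comm bm ne ij defj xC xW; apply/negPn/negP => xCj.
have sji := step2 _ _ _ _ _ _ comm bm (ne i) ij xC xW xCj.
have [c cC cA] : exists2 c, c \in intcoset (A j) & c \notin A j.
  case: (pickP [pred c | (c \in intcoset (A j)) && (c \notin A j)]) => [c /andP [] | H].
    by exists c.
  have : intcoset (A j) \subset A j.
    apply/subsetP => c cC; apply/negPn/negP => cA; move: (H c) => /=.
    by rewrite cC cA.
  by move/subset_leq_card; rewrite /intcoset card_lcoset leqNgt defj.
have cW : c \notin \bigcup_k A k.
  by apply: contra cA; apply: C_W_A.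
have cCi : c \notin intcoset (A i).
  apply/negP => cCi.
  set b := repr (A j).
  have bA : b \in A j by case/set0Pn: (ne j) => b0; apply: mem_repr.
  have h1 : b^-1 * c \in intdiff (A i).
    by apply: (subsetP sji); move: cC; rewrite /intcoset mem_lcoset.
  have bCi : b \in intcoset (A i).
    move: cCi; rewrite /intcoset !mem_lcoset => h2.
    have := groupM h2 (groupVr h1); by rewrite invMg invgK mulgA mulgK.
  have bW : b \in \bigcup_k A k by apply/bigcupP; exists j.
  have := C_W_A _ _ _ _ _ comm bm (ne i) bCi bW.
  by case: bm => disj _; rewrite (disjointFr (disj j i _) bA) // eq_sym.
have ji : j != i by rewrite eq_sym.
have sij := step2 _ _ _ _ _ _ comm bm (ne j) ji cC cW cCi.
set a := repr (A i).
have aA : a \in A i by case/set0Pn: (ne i) => a0; apply: mem_repr.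
have aW : a \in \bigcup_k A k by apply/bigcupP; exists i.
have h : x^-1 * a \in intdiff (A j).
  apply: (subsetP sij); move: xC; rewrite /intcoset -/a mem_lcoset => h.
  by rewrite -(invgK a) -invMg groupV.
have := step1 _ _ _ _ _ _ comm bm xW xCj h.
by rewrite mulKVg aW.
Qed.

Lemma inter (gT : finGroupType) (m : nat) (A : 'I_m -> {set gT}) i j :
  (forall x y : gT, commute x y) -> bimodal A -> (forall k, A k != set0) -> i != j ->
  #|A j| < #|intdiff (A j)| ->
  intcoset (A i) :&: intcoset (A j) = intcoset (A i) :\: A i.
Proof.
move=> comm bm ne ij defj; apply/setP => x; rewrite !inE.
case: (boolP (x \in intcoset (A i))) => xC; rewrite ?andbF ?andbT //.
case: (boolP (x \in A i)) => xA /=.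
  apply/negP => xCj.
  have xW : x \in \bigcup_k A k by apply/bigcupP; exists i.
  have := C_W_A _ _ _ _ _ comm bm (ne j) xCj xW.
  by case: bm => disj _; rewrite (disjointFr (disj i j ij) xA).
apply: (step3 _ _ _ _ _ _ comm bm ne ij defj xC).
apply: contra xA; exact: C_W_A.
Qed.

Theorem proposition3p4 (gT : finGroupType) (m : nat) (A : 'I_m -> {set gT}) :
  abelian [set: gT] ->
  bimodal A ->
  (forall i, A i != set0) ->
  (2 <= #|[set i | #|A i| < #|intdiff (A i)|]|)%N ->
  exists D : {set gT},
    [/\ D != set0,
        (forall i, #|A i| < #|intdiff (A i)| ->
           intcoset (A i) = A i :|: D /\ [disjoint A i & D]),
        (forall i j, #|A i| < #|intdiff (A i)| -> #|A j| < #|intdiff (A j)| ->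
           i != j -> intcoset (A i) :&: intcoset (A j) = D)
      & is_coset D].
Proof.
move=> /ab_comm comm bm ne /card_gt1P [i0 [j0 [i0d j0d ij0]]].
rewrite inE in i0d; rewrite inE in j0d.
set D := intcoset (A i0) :\: A i0.
have DI : forall i j, #|A i| < #|intdiff (A i)| -> #|A j| < #|intdiff (A j)| ->
    i != j -> intcoset (A i) :\: A i = D.
  move=> i j di dj ij.
  have ii0 : forall k, k != i0 -> #|A k| < #|intdiff (A k)| -> intcoset (A k) :\: A k = D.
    move=> k ki0 dk; rewrite -(inter _ _ _ _ _ comm bm ne ki0 i0d).
    by rewrite setIC (inter _ _ _ _ _ comm bm ne _ dk) // eq_sym.
  case: (eqVneq i i0) => [-> //|]; move=> ?; exact: ii0.
have DC : forall i, #|A i| < #|intdiff (A i)| -> intcoset (A i) :\: A i = D.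
  move=> i di; case: (eqVneq i i0) => [-> //| ii0].
  exact: (DI i i0).
have Dne : D != set0.
  case: (pickP [pred c | (c \in intcoset (A i0)) && (c \notin A i0)]) => [c cD | H].
    by apply/set0Pn; exists c; rewrite inE andbC.
  have : intcoset (A i0) \subset A i0.
    apply/subsetP => c cC; apply/negPn/negP => cA; move: (H c) => /=.
    by rewrite cC cA.
  by move/subset_leq_card; rewrite /intcoset card_lcoset leqNgt i0d.
exists D; split => //.
- move=> i di; rewrite -(DC i di); split.
    apply/setP => x; rewrite !inE; case: (boolP (x \in A i)) => xA //=.
    by rewrite (A_sub_C _ _ _ comm xA).
  by rewrite disjoints_subset; apply/subsetP => x; rewrite !inE => ->.
- move=> i j di dj ij; rewrite (inter _ _ _ _ _ comm bm ne ij dj); exact: DC.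
case/set0Pn: Dne => z zD.
have DI2 := inter _ _ _ _ _ comm bm ne ij0 j0d.
rewrite -/D in DI2.
move: (zD); rewrite -DI2 inE => /andP [zi zj].
exists (intdiff_group _ (A i0) :&: intdiff_group _ (A j0))%G; exists z.
rewrite /intcoset in zi zj *.
have -> : repr (A i0) *: intdiff (A i0) = z *: intdiff (A i0) := esym (lcoset_eqP zi).
have -> : repr (A j0) *: intdiff (A j0) = z *: intdiff (A j0) := esym (lcoset_eqP zj).
by apply/setP => x; rewrite !inE !mem_lcoset /= inE.
Qed.
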